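(* Let $n\ge1$. A signed permutation $\pi\in\mathfrak B_n$ is a type B André permutation if and only if every inner node of the tree $T_\pi\in\mathcal{BHR}_n$ is a min-node.
   Context: $\mathfrak B_n$ is the set of signed permutations $\pi=\pi_1\cdots\pi_n$ (words over $\{\pm1,\dots,\pm n\}$ with $|\pi_1|,\dots,|\pi_n|$ a permutation of $[n]$), compared as integers; always set $\pi_0=0$. Trees are rooted binary trees with each child designated left or right. A min–max tree on a totally ordered label set is labeled bijectively so that each node's label is the minimum or maximum of its subtree's labels. A node with a child is inner; an inner node is a min-node (resp. max-node) if its label is the minimum (resp. maximum) of its subtree. An HR-tree is a min–max tree in which every inner node $s$ has a nonempty right subtree containing the maximum label of the subtree of $s$ if $s$ is a min-node, the minimum if $s$ is a max-node. The reading word is the in-order reading $w(T)=w(L)\,\ell_{\mathrm{root}}\,w(R)$. $\mathcal{BHR}_n$ is the set of HR-trees whose label set is $\{0,s_1,\dots,s_n\}$ with $s_i\in\{i,-i\}$, such that $0$ is the first letter of $w(T)$; $T\mapsto w(T)=0\pi_1\cdots\pi_n$ is a bijection $\mathcal{BHR}_n\to\mathfrak B_n$, and $T_\pi$ denotes the tree with $w(T_\pi)=0\pi_1\cdots\pi_n$. For the word $0\pi_1\cdots\pi_n$ and an index $i\in[n]$, the $\pi_i$-factorization is $0\pi_1\cdots\pi_n=w_1w_2\pi_iw_4w_5$ where $w_2$ is the longest factor ending just before $\pi_i$ all of whose letters exceed $\pi_i$ and $w_4$ is the longest factor starting just after $\pi_i$ all of whose letters exceed $\pi_i$. $\pi\in\mathfrak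 B_n$ is a type B André permutation if (i) there is no $i\in\{1,\dots,n-1\}$ with $\pi_{i-1}>\pi_i>\pi_{i+1}$, (ii) $\pi_{n-1}<\pi_n$ (with $\pi_0=0$), and (iii) for every valley $i\in\{1,\dots,n-1\}$ (i.e. $\pi_{i-1}>\pi_i<\pi_{i+1}$), the maximum letter of $w_2$ is smaller than the maximum letter of $w_4$ in the $\pi_i$-factorization. (E.g. for $n=2$ these are $12$, $\bar12$, $\bar21$, where $\bar k=-k$.) *)

(* Defs.v *)
From mathcomp Require Import all_boot all_order all_algebra.
Set Implicit Arguments. Unset Strict Implicit. Unset Printing Implicit Defensive.
Import Order.TTheory GRing.Theory Num.Theory.
Local Open Scope ring_scope.

Definition signed_perm (n : nat) (pi : seq int) : Prop :=
  size pi = n /\ perm_eq [seq absz x | x <- pi] (iota 1 n).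

Inductive tree : Type :=
  | Leaf : tree
  | Node : tree -> int -> tree -> tree.

Fixpoint inorder (t : tree) : seq int :=
  match t with
  | Leaf => [::]
  | Node l x r => inorder l ++ x :: inorder r
  end.

Definition labels (t : tree) : seq int := inorder t.

Definition is_min_of (x : int) (s : seq int) : bool := all (fun y => x <= y) s.
Definition is_max_of (x : int) (s : seq int) : bool := all (fun y => y <= x) s.

Definition nonempty (t : tree) : bool := if t is Leaf then false else true.

Definition inner (l r : tree) : bool := nonempty l || nonempty r.

Fixpoint minmax_nodes (t : tree) : bool :=
  match t with
  | Leaf => true
  | Node l x r =>
      [&& (is_min_of x (labels t) || is_max_of x (labels t)),
          minmax_nodes l & minmax_nodes r]
  end.

Definition minmax_tree (t : tree) : bool := uniq (labels t) && minmax_nodes t.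

Fixpoint HR_nodes (t : tree) : bool :=
  match t with
  | Leaf => true
  | Node l x r =>
      [&& (inner l r ==>
            [&& nonempty r,
                (is_min_of x (labels t) ==>
                   has (fun y => is_max_of y (labels t)) (labels r))
              & (is_max_of x (labels t) ==>
                   has (fun y => is_min_of y (labels t)) (labels r))]),
          HR_nodes l & HR_nodes r]
  end.

Definition HR_tree (t : tree) : bool := minmax_tree t && HR_nodes t.

Definition BHR (n : nat) (t : tree) : Prop :=
  [/\ HR_tree t,
      (exists s : seq int,
         [/\ size s = n,
             (forall i : nat, (i < n)%N -> absz (nth 0 s i) = i.+1)
           & perm_eq (labels t) (0 :: s)])
    & head 1 (inorder t) = 0].

Fixpoint all_inner_min (t : tree) : bool :=
  match t with
  | Leaf => true
  | Node l x r =>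
      [&& (inner l r ==> is_min_of x (labels t)),
          all_inner_min l & all_inner_min r]
  end.

Definition seqmax (s : seq int) : int := foldr Num.max (head 0 s) s.

Definition prefix_gt (x : int) (s : seq int) : seq int :=
  take (find (fun y => ~~ (x < y)) s) s.

(* For w = 0 pi_1 ... pi_n and index i: the factors w_2 and w_4 of the
   pi_i-factorization w = w_1 w_2 pi_i w_4 w_5. *)
Definition fact_w2 (w : seq int) (i : nat) : seq int :=
  rev (prefix_gt (nth 0 w i) (rev (take i w))).
Definition fact_w4 (w : seq int) (i : nat) : seq int :=
  prefix_gt (nth 0 w i) (drop i.+1 w).

(* type B André permutation, with pi_0 = 0, w = 0 pi_1 ... pi_n,
   nth 0 w i = pi_i *)
Definition andre_B (n : nat) (pi : seq int) : Prop :=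
  let w := 0 :: pi in
  let p := fun i => nth 0 w i in
  [/\ (forall i : nat, (0 < i < n)%N -> ~ (p i.-1 > p i /\ p i > p i.+1)),
      p n.-1 < p n
    & (forall i : nat, (0 < i < n)%N -> p i.-1 > p i -> p i < p i.+1 ->
         seqmax (fact_w2 w i) < seqmax (fact_w4 w i))].

(* Main.v *)
Require Import Defs.
From mathcomp Require Import all_boot all_order all_algebra zify.
Set Implicit Arguments. Unset Strict Implicit. Unset Printing Implicit Defensive.
Import Order.TTheory GRing.Theory Num.Theory.
Local Open Scope ring_scope.


Lemma P1 (x : int) s : all (fun y => x < y) s -> prefix_gt x s = s.
Proof.
move=> H; rewrite /prefix_gt.
have -> : find (fun y => ~~ (x < y)) s = size s.
  apply: hasNfind; apply/hasPn => y ys /=.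
  by rewrite (allP H y ys).
by rewrite take_size.
Qed.

Lemma P2 (x y : int) s t : ~~ (x < y) -> prefix_gt x (s ++ y :: t) = prefix_gt x s.
Proof.
move=> H; rewrite /prefix_gt find_cat.
case: ifP => hs.
  by rewrite take_cat ifT // -has_find.
rewrite /= H addn0 take_size_cat //.
have -> : find (fun y0 => ~~ (x < y0)) s = size s by apply: hasNfind; rewrite hs.
by rewrite take_size.
Qed.

Lemma foldmax_ge (a : int) s : a <= foldr Num.max a s /\ all (fun y => y <= foldr Num.max a s) s.
Proof.
elim: s => [|y s [IH1 IH2]] /=; first by [].
split; first by rewrite le_max IH1 orbT.
rewrite le_max lexx /=; apply/allP => z zs; rewrite le_max (allP IH2 z zs) orbT //.
Qed.

Lemma foldmax_in (a : int) s : foldr Num.max a s \in a :: s.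
Proof.
elim: s => [|y s IH] /=; first by rewrite inE.
case: (leP y (foldr Num.max a s)) => _.
  by move: IH; rewrite !inE => /orP[->|->]; rewrite ?orbT.
by rewrite !inE eqxx orbT.
Qed.

Lemma seqmax_in s : s != [::] -> seqmax s \in s.
Proof.
case: s => [//|a s] _; rewrite /seqmax /=.
have := foldmax_in a (a :: s); rewrite /=.
by rewrite inE => /orP[/eqP->|//]; rewrite inE eqxx.
Qed.

Lemma seqmax_ge s y : y \in s -> y <= seqmax s.
Proof.
move=> ys; rewrite /seqmax; have [_ H] := foldmax_ge (head 0 s) s.
exact: (allP H y ys).
Qed.


Section F.
Variables (u v : seq int) (m : int).
Hypothesis Hm : all (fun y => m < y) (u ++ v).
Let w := u ++ m :: v.

Lemma mu y : y \in u -> m < y.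
Proof. by move=> yu; apply: (allP Hm); rewrite mem_cat yu. Qed.
Lemma mv y : y \in v -> m < y.
Proof. by move=> yv; apply: (allP Hm); rewrite mem_cat yv orbT. Qed.

Lemma nth_u i : (i < size u)%N -> nth 0 w i = nth 0 u i.
Proof. by move=> h; rewrite /w nth_cat h. Qed.
Lemma nth_m : nth 0 w (size u) = m.
Proof. by rewrite /w nth_cat ltnn subnn. Qed.
Lemma nth_v j : nth 0 w (size u + j.+1)%N = nth 0 v j.
Proof. by rewrite /w nth_cat ltnNge leq_addr /= addKn. Qed.

Lemma F1 i : (i < size u)%N -> fact_w2 w i = fact_w2 u i /\ fact_w4 w i = fact_w4 u i.
Proof.
move=> h; rewrite /fact_w2 /fact_w4 nth_u // /w take_cat h; split=> //.
have -> : drop i.+1 (u ++ m :: v) = drop i.+1 u ++ m :: v.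
  rewrite drop_cat; case: ifP => // h2.
  have e : i.+1 = size u by apply/eqP; rewrite eqn_leq h leqNgt h2.
  by rewrite e subnn drop0 drop_size.
rewrite P2 //; rewrite -leNgt; apply/ltW/mu/mem_nth/h.
Qed.

Lemma F2 : fact_w2 w (size u) = u /\ fact_w4 w (size u) = v.
Proof.
rewrite /fact_w2 /fact_w4 nth_m /w take_size_cat // P1 ?revK; last first.
  by apply/allP => y; rewrite mem_rev => /mu.
split=> //.
rewrite drop_cat ltnNge leqnSn /= subSn // subnn /= drop0 P1 //.
by apply/allP => y /mv.
Qed.

Lemma F3 j : (j < size v)%N ->
  fact_w2 w (size u + j.+1)%N = fact_w2 v j /\ fact_w4 w (size u + j.+1)%N = fact_w4 v j.
Proof.
move=> h; rewrite /fact_w2 /fact_w4 nth_v; split.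
  rewrite /w take_cat ltnNge leq_addr /= addKn /= rev_cat rev_cons cat_rcons P2 //.
  rewrite -leNgt; apply/ltW/mv/mem_nth/h.
rewrite /w drop_cat ifF; last by apply/negbTE; rewrite -leqNgt -addnS leq_addr.
by rewrite -addnS addKn.
Qed.
End F.


Definition okw (w : seq int) (i : nat) : Prop :=
  ~ (nth 0 w i.-1 > nth 0 w i /\ nth 0 w i > nth 0 w i.+1) /\
  (nth 0 w i.-1 > nth 0 w i -> nth 0 w i < nth 0 w i.+1 ->
     seqmax (fact_w2 w i) < seqmax (fact_w4 w i)).

Definition Lw (w : seq int) : Prop := nth 0 w ((size w).-1).-1 < nth 0 w (size w).-1.

Definition Aw (w : seq int) : Prop :=
  (forall i, (0 < i < (size w).-1)%N -> okw w i) /\ Lw w.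

Section G.
Variables (u v : seq int) (m : int).
Hypothesis Hm : all (fun y => m < y) (u ++ v).

Lemma okU i : (i.+1 < size u)%N -> okw (u ++ m :: v) i <-> okw u i.
Proof.
move=> h; have [e2 e4] := F1 Hm (i:=i) ltac:(lia).
rewrite /okw (@nth_u u v m (i.-1)) ?(@nth_u u v m (i)) ?(@nth_u u v m (i.+1)) ?e2 ?e4; [exact: iff_refl|..]. all: lia.
Qed.

Lemma okV j : (0 < j)%N -> (j < size v)%N -> okw (u ++ m :: v) (size u + j.+1)%N <-> okw v j.
Proof.
case: j => [//|j] _ h; have [e2 e4] := F3 Hm h.
rewrite /okw e2 e4.
have -> : ((size u + j.+2).-1 = size u + j.+1)%N by lia.
have -> : ((size u + j.+2).+1 = size u + j.+3)%N by lia.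
rewrite !nth_v; reflexivity.
Qed.

Lemma okKm1 (Hu : uniq u) : (2 <= size u)%N -> okw (u ++ m :: v) (size u).-1 <-> Lw u.
Proof.
move=> h; rewrite /okw /Lw.
rewrite (@nth_u u v m ((size u).-1.-1)); last lia.
rewrite (@nth_u u v m ((size u).-1)); last lia.
have -> : (size u).-1.+1 = size u by lia.
rewrite nth_m.
have s1 : ((size u).-1 < size u)%N by lia.
have s2 : ((size u).-1.-1 < size u)%N by lia.
have hm : m < nth 0 u (size u).-1 by apply: (mu Hm); apply: mem_nth; exact s1.
have hne : nth 0 u (size u).-1.-1 != nth 0 u (size u).-1.
  by rewrite nth_uniq //; lia.
split.
  case=> H _; rewrite lt_neqAle hne /=; rewrite leNgt; apply/negP => H2; apply: H; split=> //.
move=> H; split; first by case=> H1 _; move: (lt_trans H1 H); rewrite ltxx.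
by move=> _; rewrite ltNge (ltW hm).
Qed.

Lemma okK : u != [::] -> v != [::] -> okw (u ++ m :: v) (size u) <-> seqmax u < seqmax v.
Proof.
move=> une vne; have [e2 e4] := F2 Hm; rewrite /okw e2 e4 nth_m.
have s0 : (0 < size u)%N by rewrite lt0n size_eq0.
have s1 : ((size u).-1 < size u)%N by lia.
rewrite (@nth_u u v m ((size u).-1)) //.
have -> : (size u).+1 = (size u + 0.+1)%N by rewrite addnS addn0.
rewrite nth_v.
have ha : m < nth 0 u (size u).-1 by apply: (mu Hm); apply: mem_nth; exact s1.
have hb : m < nth 0 v 0 by apply: (mv Hm); apply: mem_nth; rewrite lt0n size_eq0.
split; first by case=> _ H; apply: H.
move=> H; split; last by move=> _ _.
by case=> _ H2; move: (lt_trans H2 hb); rewrite ltxx.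
Qed.

Lemma okK1 : v != [::] -> okw (u ++ m :: v) (size u + 0.+1)%N.
Proof.
move=> vne; rewrite /okw.
have -> : ((size u + 0.+1).-1 = size u)%N by rewrite addnS addn0.
rewrite nth_m nth_v.
have hb : m < nth 0 v 0 by apply: (mv Hm); apply: mem_nth; rewrite lt0n size_eq0.
split; first by case=> H _; move: (lt_trans H hb); rewrite ltxx.
by move=> H; move: (lt_trans H hb); rewrite ltxx.
Qed.

End G.

Lemma DL (u v : seq int) (m : int) :
  all (fun y => m < y) (u ++ v) -> uniq u -> (1 <= size u + size v)%N ->
  Aw (u ++ m :: v) <->
  [/\ v != [::], (u != [::] -> seqmax u < seqmax v),
      ((size u <= 1)%N \/ Aw u) & ((size v <= 1)%N \/ Aw v)].
Proof.
move=> Hm Hu hs; rewrite /Aw /Lw size_cat /=.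
have eN : ((size u + (size v).+1).-1 = size u + size v)%N by lia.
rewrite eN.
split.
- case=> Hok HL.
  have vne : v != [::].
    apply/negP => /eqP v0; have sv : size v = 0%N by rewrite v0.
    rewrite sv addn0 nth_m in HL.
    rewrite (@nth_u u v m ((size u).-1)) in HL; last lia.
    have s1 : ((size u).-1 < size u)%N by lia.
    have ha : m < nth 0 u (size u).-1 by apply: (mu Hm); apply: mem_nth; exact s1.
    by move: (lt_trans HL ha); rewrite ltxx.
  have sv : (0 < size v)%N by rewrite lt0n size_eq0.
  split=> //.
  + move=> une; have su : (0 < size u)%N by rewrite lt0n size_eq0.
    apply: (proj1 (okK Hm une vne)); apply: Hok; lia.
  + case: (leqP (size u) 1) => hu; [by left | right]; split.
      move=> i hi; have hi' : (i.+1 < size u)%N by lia.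
      apply: (proj1 (okU Hm hi')); apply: Hok; lia.
    apply: (proj1 (okKm1 Hm Hu hu)); apply: Hok; lia.
  + case: (leqP (size v) 1) => hv; [by left | right]; split.
      move=> j hj; have hj1 : (0 < j)%N by lia.
      have hj2 : (j < size v)%N by lia.
      apply: (proj1 (okV Hm hj1 hj2)); apply: Hok; lia.
    have e2 : ((size u + size v).-1 = size u + ((size v).-2).+1)%N by lia.
    have e1 : (size u + size v = size u + ((size v).-1).+1)%N by lia.
    rewrite e2 in HL; rewrite e1 in HL; rewrite !nth_v in HL.
    by rewrite /Lw.
- case=> vne hmax hu hv.
  have sv : (0 < size v)%N by rewrite lt0n size_eq0.
  split.
  + move=> i hi; case: (ltngtP i.+1 (size u)) => h1.
    * case: hu => [hu|[Hu' _]]; first lia.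
      have hi' : (i.+1 < size u)%N by lia.
      apply: (proj2 (okU Hm hi')); apply: Hu'; lia.
    * case: (ltngtP i (size u)) => h2; first lia.
        have ei : (i = size u + (i - size u).-1.+1)%N by lia.
        rewrite ei; case e: (i - size u).-1 => [|j].
          exact: okK1.
        rewrite -e; have hj1 : (0 < (i - size u).-1)%N by lia.
        have hj2 : ((i - size u).-1 < size v)%N by lia.
        apply: (proj2 (okV Hm hj1 hj2)).
        case: hv => [hv|[Hv' _]]; first lia.
        apply: Hv'; lia.
      have su : (0 < size u)%N by lia.
      have une : u != [::] by rewrite -size_eq0 -lt0n; exact su.
      rewrite h2; apply: (proj2 (okK Hm une vne)); exact: hmax.
    * have ei : i = (size u).-1 by lia.
      rewrite ei; case: hu => [hu|[_ HL]]; first lia.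
      have h2 : (2 <= size u)%N by lia.
      by apply: (proj2 (okKm1 Hm Hu h2)).
  + case: (ltngtP (size v) 1) => hv1; first lia.
      case: hv => [hv|[_ HL]]; first lia.
      have e2 : ((size u + size v).-1 = size u + ((size v).-2).+1)%N by lia.
      have e1 : (size u + size v = size u + ((size v).-1).+1)%N by lia.
      rewrite e2 e1 !nth_v; exact HL.
    rewrite hv1.
    have -> : ((size u + 1).-1 = size u)%N by lia.
    rewrite nth_m (@nth_v u v m 0).
    by apply: (mv Hm); apply: mem_nth; rewrite hv1.
Qed.


Lemma split_in (s : seq int) y : y \in s -> exists s1 s2, s = s1 ++ y :: s2.
Proof.
move=> ys; exists (take (index y s) s), (drop (index y s).+1 s).
by rewrite -{1}(cat_take_drop (index y s) s) (drop_nth y) ?index_mem // nth_index.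
Qed.

Lemma min_strict (a b : seq int) (y : int) :
  uniq (a ++ y :: b) -> is_min_of y (a ++ y :: b) -> all (fun z => y < z) (a ++ b).
Proof.
rewrite cat_uniq /= => /and3P[_ hn /andP[yb _]] /allP H.
have ya : y \notin a by move: hn; apply: contra => ya; rewrite /= ya.
apply/allP => z zin; rewrite lt_neqAle; apply/andP; split.
  apply/negP => /eqP e; move: zin; rewrite -e mem_cat (negbTE ya) (negbTE yb) //.
apply: H; move: zin; rewrite !mem_cat inE => /orP[->//|->]; rewrite !orbT //.
Qed.

Lemma tree_main T : uniq (inorder T) -> minmax_nodes T -> HR_nodes T ->
  all_inner_min T <-> ((size (inorder T) <= 1)%N \/ Aw (inorder T)).
Proof.
elim: T => [|l IHl x r IHr] /=.
  by move=> _ _ _; split=> // _; left.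
case hin: (inner l r); last first.
  have [-> ->] : l = Leaf /\ r = Leaf.
    by move: hin; rewrite /inner; case: (l); case: (r).
  move=> /= _ _ _; split=> _; first by left.
  by [].
rewrite /labels /=.
set u := inorder l; set v := inorder r.
move=> hU /and3P[hmm mml mmr] /and3P[hhr hrl hrr].
have hUu : uniq u by move: hU; rewrite cat_uniq => /and3P[].
have hUv : uniq v by move: hU; rewrite cat_uniq => /and3P[_ _ /andP[]].
have IHl' := IHl hUu mml hrl; have IHr' := IHr hUv mmr hrr.
move: hhr => /and3P[rne hmin_imp hmax_imp].
have vne : v != [::] by move: rne; rewrite /v; case: (r) => //= a b c _; case: (inorder a).
have sv : (0 < size v)%N by rewrite lt0n size_eq0.
have hsz : ~ (size (u ++ x :: v) <= 1)%N.
  by apply/negP; rewrite size_cat /= -ltnNge addnS ltnS addn_gt0 sv orbT.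
case hmin: (is_min_of x (u ++ x :: v)).
- have Hm := min_strict hU hmin.
  have hs1 : (1 <= size u + size v)%N by rewrite addn_gt0 sv orbT.
  rewrite /=; split.
  + move=> /andP[al ar]; right; apply/(DL Hm hUu hs1); split=> //.
    * move=> une; move: hmin_imp; rewrite hmin /= => /hasP[y yv ymax].
      have s1 := seqmax_in une.
      have h1 : seqmax u <= y by apply: (allP ymax); rewrite mem_cat s1.
      have h2 : seqmax u != y.
        apply/negP => /eqP e; move: hU; rewrite cat_uniq => /and3P[_ hn _].
        move: hn; rewrite /= => /norP[_ /hasPn H]; move: (H _ yv).
        by rewrite /= -e s1.
      by apply: (lt_le_trans _ (seqmax_ge yv)); rewrite lt_neqAle h2 h1.
    * by apply/IHl'.
    * by apply/IHr'.
  + case=> // /(DL Hm hUu hs1) [_ _ hl hr].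
    by apply/andP; split=> //; [apply/IHl' | apply/IHr'].
- have hmax : is_max_of x (u ++ x :: v) by move: hmm; rewrite hmin.
  move: hmax_imp; rewrite hmax /= => /hasP[y yv ymin].
  split=> //; case=> // HA; exfalso.
  have [v1 [v2 ev]] := split_in yv.
  move: HA hU ymin hmax; rewrite ev.
  have -> : u ++ x :: v1 ++ y :: v2 = (u ++ x :: v1) ++ y :: v2 by rewrite -catA.
  move=> HA hU' ymin hmax.
  have Hm := min_strict hU' ymin.
  have hU1 : uniq (u ++ x :: v1) by move: hU'; rewrite cat_uniq => /and3P[].
  have hs1 : (1 <= size (u ++ x :: v1) + size v2)%N by rewrite size_cat /= addnS addSn.
  case/(DL Hm hU1 hs1): HA => v2ne hlt _ _.
  have une : u ++ x :: v1 != [::] by case: (u).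
  have := hlt une.
  have h1 : x <= seqmax (u ++ x :: v1) by apply: seqmax_ge; rewrite mem_cat inE eqxx orbT.
  have h2 : seqmax v2 <= x.
    by apply: (allP hmax); rewrite mem_cat inE (seqmax_in v2ne) !orbT.
  by move=> h3; move: (lt_le_trans (le_lt_trans h1 h3) h2); rewrite ltxx.
Qed.


Lemma andre_Aw (n : nat) (pi : seq int) : size pi = n -> andre_B n pi <-> Aw (0 :: pi).
Proof.
move=> hs; rewrite /andre_B /Aw /Lw /= hs /okw; split.
- case=> H1 H2 H3; split=> // i hi; split; [exact: H1 | exact: H3].
- case=> H H2; split=> //.
  + by move=> i hi; case: (H i hi).
  + by move=> i hi; case: (H i hi).
Qed.

Theorem mainTheorem8 (n : nat) (pi : seq int) (T : tree) :
  (1 <= n)%N -> signed_perm n pi -> BHR n T -> inorder T = 0 :: pi ->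
  (andre_B n pi <-> all_inner_min T).
Proof.
move=> hn [hs _] [hHR _ _] hT.
move: hHR; rewrite /HR_tree /minmax_tree => /andP[/andP[hu hmm] hhr].
have := tree_main hu hmm hhr; rewrite hT => ->.
rewrite (andre_Aw hs); split; first by right.
case=> //; rewrite /= hs => h; exfalso; move: h; rewrite ltnNge ?hn //=.

Qed.
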